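(* Let $B$ be a blueprint. Every maximal ideal of $B$ is a prime ideal. If $B$ has a zero, then every maximal congruence on $B$ is a prime congruence.
   Context: A monoid is a commutative semigroup $A$, written multiplicatively, with neutral element $1$. For a monoid $A$, $\mathbb N[A]$ denotes the semiring of finite formal sums $\sum a_i$ of elements $a_i\in A$ (repetitions allowed), with empty sum $\underline0$ and multiplication extended bilinearly from $A$. A pre-addition on $A$ is a relation $\mathcal R\subseteq\mathbb N[A]\times\mathbb N[A]$, written $\sum a_i\equiv\sum b_j$, which is an equivalence relation and satisfies: if $\sum a_i\equiv\sum b_j$ and $\sum c_k\equiv\sum d_l$, then $\sum a_i+\sum c_k\equiv\sum b_j+\sum d_l$ and $\sum_{i,k}a_ic_k\equiv\sum_{j,l}b_jd_l$. A blueprint $B=(A,\mathcal R)$ is a monoid $A$ with a pre-addition $\mathcal R$; we write $a\in B$ for $a\in A$. An element $e$ with $e\equiv\underline0$ is a zero of $B$. $B$ is proper if $a\equiv b$ for $a,b\in A$ implies $a=b$. For an equivalence relation $\sim$ on $A$, its linear extension $\sim_{\mathbb N}$ is the equivalence relation on $\mathbb N[A]$ generated by $\sum_{i=1}^n a_i\sim_{\mathbb N}\sum_{i=1}^n b_i$ whenever $a_i\sim b_i$ for all $i$; $\sim_{\mathcal R}$ is the smallest equivalence relation on $\mathbb N[A]$ containing $\mathcal R$ and $\sim_{\mathbb N}$. A congruence on $B$ is an equivalence relation $\sim$ on $A$ such that (C1) $\sim_{\mathbb N}$ is a pre-addition, and (C2) the restriction of $\sim_{\mathcal R}$ to $A$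 equals $\sim$. The quotient $B/\sim$ has monoid $A/\sim$ and the smallest pre-addition containing all $\sum[a_i]\equiv\sum[b_j]$ with $\sum a_i\equiv\sum b_j$ in $B$. A congruence is proper if it has more than one equivalence class; a maximal congruence is a proper congruence not contained in a strictly larger proper congruence. A blueprint is integral if it is proper, $1\not\equiv\underline0$, and every element is either a zero or integral (multiplication by it is injective on the monoid). A prime congruence is a proper congruence $\sim$ with $B/\sim$ integral. For $I\subseteq B$: $a\sim^I b$ iff $a=b$ or $a,b\in I$; $a\sim_I b$ iff there is a finite sequence $a\equiv\sum_k c_{1,k}\sim^I_{\mathbb N}\sum_k d_{1,k}\equiv\cdots\sim^I_{\mathbb N}\sum_k d_{n,k}\equiv b$ with $c_{i,k},d_{i,k}\in A$. An ideal is a subset $I$ with (I1) $IB\subseteq I$; (I2) every zero of $B$ lies in $I$; (I3) if $a\sim_I b$ and $b\in I$ then $a\in I$. An ideal is proper if $I\neq B$; a maximal ideal is a proper ideal not contained in a strictly larger proper ideal. A prime ideal is an ideal $\mathfrak p$ such that $B\setminus\mathfrak p$ is a submonoid of $A$ (contains $1$, closed under multiplication). *)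

(* Defs.v *)
From Stdlib Require Import List Permutation Relations ClassicalEpsilon.
Import ListNotations.


(* Elements of N[A] (finite formal sums) are represented
   by lists; a relation on N[A] is a relation on lists invariant under
   permutation (this invariance is part of [is_preaddition]). *)
Record bp := BP {
  bT : Type;
  bmul : bT -> bT -> bT;
  bone : bT;
  bR : list bT -> list bT -> Prop }.

Definition nprod (T : Type) (mul : T -> T -> T) (s t : list T) : list T :=
  flat_map (fun a => map (fun c => mul a c) t) s.

Definition is_preaddition (T : Type) (mul : T -> T -> T)
  (P : list T -> list T -> Prop) : Prop :=
  (forall s s' t t', Permutation s s' -> Permutation t t' -> P s t -> P s' t')
  /\ (forall s, P s s)
  /\ (forall s t, P s t -> P t s)
  /\ (forall s t u, P s t -> P t u -> P s u)
  /\ (forall s t u v, P s t -> P u v -> P (s ++ u) (t ++ v))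
  /\ (forall s t u v, P s t -> P u v -> P (nprod T mul s u) (nprod T mul t v)).

Definition is_monoid (B : bp) : Prop :=
  (forall a b c, bmul B a (bmul B b c) = bmul B (bmul B a b) c)
  /\ (forall a b, bmul B a b = bmul B b a)
  /\ (forall a, bmul B (bone B) a = a).

Definition is_blueprint (B : bp) : Prop :=
  is_monoid B /\ is_preaddition (bT B) (bmul B) (bR B).

Definition is_zero (B : bp) (e : bT B) : Prop := bR B [e] [].

Definition proper_bp (B : bp) : Prop :=
  forall a b, bR B [a] [b] -> a = b.

Definition integral_elt (B : bp) (a : bT B) : Prop :=
  forall b c, bmul B a b = bmul B a c -> b = c.

Definition integral_bp (B : bp) : Prop :=
  proper_bp B /\ ~ bR B [bone B] [] /\
  forall a, is_zero B a \/ integral_elt B a.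

(* linear extension ~_N: equivalence relation on N[A] generated by
   pointwise relatedness (lists taken up to permutation, i.e. multisets) *)
Definition linN (T : Type) (sim : T -> T -> Prop) : list T -> list T -> Prop :=
  clos_refl_sym_trans (list T)
    (fun s t => Forall2 sim s t \/ Permutation s t).

Definition simR (B : bp) (sim : bT B -> bT B -> Prop) :
  list (bT B) -> list (bT B) -> Prop :=
  clos_refl_sym_trans (list (bT B)) (fun s t => bR B s t \/ linN (bT B) sim s t).

Definition is_congruence (B : bp) (sim : bT B -> bT B -> Prop) : Prop :=
  equivalence (bT B) sim
  /\ is_preaddition (bT B) (bmul B) (linN (bT B) sim)
  /\ (forall a b, simR B sim [a] [b] <-> sim a b).

Definition proper_congruence (B : bp) (sim : bT B -> bT B -> Prop) : Prop :=
  is_congruence B sim /\ exists a b, ~ sim a b.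

Definition maximal_congruence (B : bp) (sim : bT B -> bT B -> Prop) : Prop :=
  proper_congruence B sim /\
  forall sim' : bT B -> bT B -> Prop, proper_congruence B sim' ->
    (forall a b, sim a b -> sim' a b) -> (forall a b, sim' a b -> sim a b).

(* quotient B/~ : classes are the predicates sim a *)
Definition qcarrier (B : bp) (sim : bT B -> bT B -> Prop) : Type :=
  { P : bT B -> Prop | exists a, P = sim a }.

Definition qcls (B : bp) (sim : bT B -> bT B -> Prop) (a : bT B) : qcarrier B sim :=
  exist _ (sim a) (ex_intro _ a eq_refl).

Definition qrep (B : bp) (sim : bT B -> bT B -> Prop) (q : qcarrier B sim) : bT B :=
  proj1_sig (constructive_indefinite_description _ (proj2_sig q)).

Definition qmul (B : bp) (sim : bT B -> bT B -> Prop) (q1 q2 : qcarrier B sim) :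
  qcarrier B sim := qcls B sim (bmul B (qrep B sim q1) (qrep B sim q2)).

(* smallest pre-addition containing all sum [a_i] = sum [b_j] with
   sum a_i = sum b_j in B *)
Definition qR (B : bp) (sim : bT B -> bT B -> Prop) (s t : list (qcarrier B sim))
  : Prop :=
  forall P : list (qcarrier B sim) -> list (qcarrier B sim) -> Prop,
    is_preaddition (qcarrier B sim) (qmul B sim) P ->
    (forall u v, bR B u v -> P (map (qcls B sim) u) (map (qcls B sim) v)) ->
    P s t.

Definition quotient_bp (B : bp) (sim : bT B -> bT B -> Prop) : bp :=
  BP (qcarrier B sim) (qmul B sim) (qcls B sim (bone B)) (qR B sim).

Definition prime_congruence (B : bp) (sim : bT B -> bT B -> Prop) : Prop :=
  proper_congruence B sim /\ integral_bp (quotient_bp B sim).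

Definition simI_up (B : bp) (I : bT B -> Prop) (a b : bT B) : Prop :=
  a = b \/ (I a /\ I b).

(* a ~_I b : a = sum c_1 ~^I_N sum d_1 = sum c_2 ~^I_N ... ~^I_N sum d_n = b *)
Definition simI_low (B : bp) (I : bT B -> Prop) (a b : bT B) : Prop :=
  exists (n : nat) (c d : nat -> list (bT B)),
    0 < n /\
    bR B [a] (c 0) /\
    (forall i, i < n -> linN (bT B) (simI_up B I) (c i) (d i)) /\
    (forall i, S i < n -> bR B (d i) (c (S i))) /\
    bR B (d (pred n)) [b].

Definition is_ideal (B : bp) (I : bT B -> Prop) : Prop :=
  (forall a b, I a -> I (bmul B a b))
  /\ (forall e, is_zero B e -> I e)
  /\ (forall a b, simI_low B I a b -> I b -> I a).

Definition proper_ideal (B : bp) (I : bT B -> Prop) : Prop :=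
  is_ideal B I /\ exists a, ~ I a.

Definition maximal_ideal (B : bp) (I : bT B -> Prop) : Prop :=
  proper_ideal B I /\
  forall J : bT B -> Prop, proper_ideal B J ->
    (forall a, I a -> J a) -> (forall a, J a -> I a).

Definition prime_ideal (B : bp) (p : bT B -> Prop) : Prop :=
  is_ideal B p /\ ~ p (bone B) /\
  (forall a b, ~ p a -> ~ p b -> ~ p (bmul B a b)).

(* Main.v *)
Require Import Defs.
From Stdlib Require Import List Permutation Relations ClassicalEpsilon Classical FunctionalExtensionality PropExtensionality ProofIrrelevance.
Import ListNotations.

Lemma nprod_app_l T mul s s' u : nprod T mul (s ++ s') u = nprod T mul s u ++ nprod T mul s' u.
Proof. unfold nprod. apply flat_map_app. Qed.

Lemma perm_nprod_l T mul s s' u : Permutation s s' -> Permutation (nprod T mul s u) (nprod T mul s' u).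
Proof. unfold nprod. induction 1; simpl; auto.
 - apply Permutation_app_head; auto.
 - rewrite !app_assoc. apply Permutation_app_tail. apply Permutation_app_comm.
 - eapply Permutation_trans; eauto. Qed.

Lemma perm_nprod_r T mul s u u' : Permutation u u' -> Permutation (nprod T mul s u) (nprod T mul s u').
Proof. intro H; unfold nprod; induction s; simpl; auto.
 apply Permutation_app; auto. apply Permutation_map; auto. Qed.

Lemma f2_nprod_l T mul (R : T -> T -> Prop) s s' u :
  (forall a b c, R a b -> R (mul a c) (mul b c)) ->
  Forall2 R s s' -> Forall2 R (nprod T mul s u) (nprod T mul s' u).
Proof. intros HR H; unfold nprod; induction H; simpl; auto.
 apply Forall2_app; auto. clear -HR H. induction u; simpl; auto. Qed.

Lemma f2_nprod_r T mul (R : T -> T -> Prop) s u u' :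
  (forall a b c, R a b -> R (mul c a) (mul c b)) ->
  Forall2 R u u' -> Forall2 R (nprod T mul s u) (nprod T mul s u').
Proof. intros HR H; unfold nprod; induction s; simpl; auto.
 apply Forall2_app; auto. clear -HR H. induction H; simpl; auto. Qed.

Lemma f2_refl T (R : T -> T -> Prop) s : (forall x, R x x) -> Forall2 R s s.
Proof. intro H; induction s; auto. Qed.

Lemma crst_map2 (A B:Type) (R : A -> A -> Prop) (R': B -> B -> Prop) (g : A -> B) :
  (forall x y, R x y -> clos_refl_sym_trans B R' (g x) (g y)) ->
  forall x y, clos_refl_sym_trans A R x y -> clos_refl_sym_trans B R' (g x) (g y).
Proof. intros H x y Hxy; induction Hxy.
 - apply H; auto. - apply rst_refl. - apply rst_sym; auto. - eapply rst_trans; eauto. Qed.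

Lemma crst_bin (A:Type) (R: A->A->Prop) (f: A->A->A) :
  (forall x y z, R x y -> clos_refl_sym_trans A R (f x z) (f y z)) ->
  (forall x y z, R x y -> clos_refl_sym_trans A R (f z x) (f z y)) ->
  forall x y u v, clos_refl_sym_trans A R x y -> clos_refl_sym_trans A R u v ->
    clos_refl_sym_trans A R (f x u) (f y v).
Proof. intros H1 H2 x y u v Hxy Huv. eapply rst_trans.
  - apply (crst_map2 _ _ R R (fun w => f w u)); [intros; apply H1; auto | exact Hxy].
  - apply (crst_map2 _ _ R R (fun w => f y w)); [intros; apply H2; auto | exact Huv]. Qed.

Lemma linN_preadd T mul (sim : T -> T -> Prop) :
  (forall x, sim x x) ->
  (forall a b c, sim a b -> sim (mul a c) (mul b c)) ->
  (forall a b c, sim a b -> sim (mul c a) (mul c b)) ->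
  is_preaddition T mul (linN T sim).
Proof. intros Hr Hl Hrr. unfold linN.
 split; [|split; [|split; [|split; [|split]]]].
 - intros s s' t t' Hs Ht H. eapply rst_trans; [|eapply rst_trans; [exact H|]].
   + apply rst_sym, rst_step; right; auto.
   + apply rst_step; right; auto.
 - intros; apply rst_refl.
 - intros; apply rst_sym; auto.
 - intros; eapply rst_trans; eauto.
 - apply crst_bin; intros x y z [H|H]; apply rst_step.
   + left; apply Forall2_app; auto using f2_refl.
   + right; apply Permutation_app_tail; auto.
   + left; apply Forall2_app; auto using f2_refl.
   + right; apply Permutation_app_head; auto.
 - apply crst_bin; intros x y z [H|H]; apply rst_step.
   + left; apply f2_nprod_l; auto.
   + right; apply perm_nprod_l; auto.
   + left; apply f2_nprod_r; auto.
   + right; apply perm_nprod_r; auto.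
Qed.

Lemma preadd_union T mul (P1 P2 : list T -> list T -> Prop) :
  is_preaddition T mul P1 -> is_preaddition T mul P2 ->
  is_preaddition T mul (clos_refl_sym_trans _ (fun s t => P1 s t \/ P2 s t)).
Proof. intros [p1 [r1 [_ [_ [a1 m1]]]]] [p2 [r2 [_ [_ [a2 m2]]]]].
 split; [|split; [|split; [|split; [|split]]]].
 - intros s s' t t' Hs Ht H. eapply rst_trans; [|eapply rst_trans; [exact H|]].
   + apply rst_step; left. apply (p1 s s' s s); auto.
   + apply rst_step; left. apply (p1 t t t t'); auto.
 - intros; apply rst_refl.
 - intros; apply rst_sym; auto.
 - intros; eapply rst_trans; eauto.
 - apply crst_bin; intros x y z [H|H]; apply rst_step; auto.
 - apply crst_bin; intros x y z [H|H]; apply rst_step; auto.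
Qed.

Lemma nprod1 T mul a s : nprod T mul [a] s = map (mul a) s.
Proof. unfold nprod; simpl. rewrite app_nil_r. reflexivity. Qed.

Lemma linN_map T (R R' : T -> T -> Prop) f s t :
  (forall x y, R x y -> R' (f x) (f y)) ->
  linN T R s t -> linN T R' (map f s) (map f t).
Proof. intros H. apply crst_map2. intros x y [Hx|Hx]; apply rst_step.
 - left. induction Hx; simpl; auto.
 - right. apply Permutation_map; auto. Qed.

Lemma part1 (B : bp) (HB : is_blueprint B) :
  forall I : bT B -> Prop, maximal_ideal B I -> prime_ideal B I.
Proof.
  destruct HB as [[Hassoc [Hcomm Hone]] [Pp [Pr [Ps [Pt [Pa Pm]]]]]].
  intros I [[[I1 [I2 I3]] [a0 Ha0]] Hmax].
  assert (Hone' : ~ I (bone B)).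
  { intro H. apply Ha0. rewrite <- (Hone a0). apply I1; auto. }
  split; [split; auto|split; auto].
  intros a b Ha Hb Hab.
  set (J := fun x => I (bmul B a x)).
  assert (HJ : proper_ideal B J).
  { split.
    - split; [|split].
      + intros x y Hx. unfold J in *. rewrite Hassoc. apply I1; auto.
      + intros e He. unfold J. apply I2. unfold is_zero in *.
        pose proof (Pm [a] [a] [e] [] (Pr _) He) as H. rewrite !nprod1 in H. exact H.
      + intros x y [n [c [d [Hn [H0 [Hl [Hb' Hend]]]]]]] Hy. unfold J in *.
        apply (I3 _ (bmul B a y)); auto.
        exists n, (fun i => map (bmul B a) (c i)), (fun i => map (bmul B a) (d i)).
        split; auto. split; [|split; [|split]].
        * pose proof (Pm [a] [a] [x] (c 0) (Pr _) H0) as H. rewrite !nprod1 in H. exact H.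
        * intros i Hi. apply linN_map with (R := simI_up B J); auto.
          intros u v [->|[Hu Hv]]; [left; auto | right; auto].
        * intros i Hi. pose proof (Pm [a] [a] _ _ (Pr _) (Hb' i Hi)) as H. rewrite !nprod1 in H. exact H.
        * pose proof (Pm [a] [a] _ _ (Pr _) Hend) as H. rewrite !nprod1 in H. exact H.
    - exists (bone B). unfold J. rewrite Hcomm, Hone. exact Ha. }
  apply Hb. apply (Hmax J HJ); auto.
  intros x Hx. unfold J. rewrite Hcomm. apply I1; auto.
Qed.

Lemma qrep_eq B sim (q : qcarrier B sim) : proj1_sig q = sim (qrep B sim q).
Proof. unfold qrep. destruct (constructive_indefinite_description _ _) as [a Ha]. simpl. exact Ha. Qed.

Lemma qcls_qrep B sim q : qcls B sim (qrep B sim q) = q.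
Proof. pose proof (qrep_eq B sim q) as H. destruct q as [P HP]. simpl in H. unfold qcls.
  apply subset_eq_compat. symmetry; exact H. Qed.

Lemma qcls_eq B sim a b : equivalence _ sim -> sim a b -> qcls B sim a = qcls B sim b.
Proof. intros [Hr Ht Hs] H. unfold qcls. apply subset_eq_compat.
  apply functional_extensionality; intro x. apply propositional_extensionality.
  split; intro; eauto. Qed.

Lemma qcls_inj B sim a b : equivalence _ sim -> qcls B sim a = qcls B sim b -> sim a b.
Proof. intros [Hr Ht Hs] H. apply (f_equal (@proj1_sig _ _)) in H. simpl in H.
  rewrite H. apply Hr. Qed.

Lemma qrep_qcls B sim a : equivalence _ sim -> sim (qrep B sim (qcls B sim a)) a.
Proof. intros [Hr Ht Hs]. pose proof (qrep_eq B sim (qcls B sim a)) as H. simpl in H.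
  rewrite <- H. apply Hr. Qed.

Lemma part2 (B : bp) (HB : is_blueprint B) :
  (exists e : bT B, is_zero B e) ->
   forall sim : bT B -> bT B -> Prop,
     maximal_congruence B sim -> prime_congruence B sim.
Proof.
  pose proof HB as [[Hassoc [Hcomm Hone]] HP].
  pose proof HP as [Pp [Pr [Ps [Pt [Pa Pm]]]]].
  intros [e He] sim [[Hc [a1 [b1 Hab1]]] Hmax].
  pose proof Hc as [Heq [HC1 HC2]].
  pose proof Heq as [Hr Htr Hsy].
  assert (Hone_r : forall x, bmul B x (bone B) = x) by (intros; rewrite Hcomm; auto).
  assert (HQ : is_preaddition _ (bmul B) (simR B sim)) by (apply preadd_union; auto).
  pose proof HQ as [Qp [Qr [Qs [Qt [Qa Qm]]]]].
  assert (Hf2 : forall s t, Forall2 sim s t -> simR B sim s t).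
  { intros s t H. apply rst_step; right; apply rst_step; left; auto. }
  assert (HmulL : forall x y z, sim x y -> sim (bmul B x z) (bmul B y z)).
  { intros x y z H. apply HC2. pose proof (Qm [x] [y] [z] [z] (Hf2 _ _ (Forall2_cons _ _ H (Forall2_nil _))) (Qr _)) as H'.
    rewrite !nprod1 in H'. exact H'. }
  assert (HmulR : forall x y z, sim x y -> sim (bmul B z x) (bmul B z y)).
  { intros x y z H. rewrite (Hcomm z x), (Hcomm z y). auto. }
  assert (HqR : forall s t, qR B sim s t -> simR B sim (map (qrep B sim) s) (map (qrep B sim) t)).
  { intros s t H. apply (H (fun s t => simR B sim (map (qrep B sim) s) (map (qrep B sim) t))).
    - split; [|split; [|split; [|split; [|split]]]].
      + intros s0 s' t0 t' Hs Ht H0. apply (Qp _ _ _ _ (Permutation_map _ Hs) (Permutation_map _ Ht) H0).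
      + intros; apply Qr.
      + intros; apply Qs; auto.
      + intros; eapply Qt; eauto.
      + intros s0 t0 u v H1 H2. rewrite !map_app. apply Qa; auto.
      + assert (HF : forall s0 u, Forall2 sim (map (qrep B sim) (nprod _ (qmul B sim) s0 u))
                        (nprod _ (bmul B) (map (qrep B sim) s0) (map (qrep B sim) u))).
        { intros s0 u. unfold nprod. induction s0; simpl; auto.
          rewrite map_app. apply Forall2_app; auto. clear IHs0.
          induction u; simpl; auto. constructor; auto. unfold qmul. apply qrep_qcls; auto. }
        intros s0 t0 u v H1 H2. eapply Qt; [apply Hf2, HF|]. eapply Qt; [apply Qm; [exact H1|exact H2]|].
        apply Qs, Hf2, HF.
    - intros u v Huv. rewrite !map_map.
      assert (HF : forall w, Forall2 sim (map (fun x => qrep B sim (qcls B sim x)) w) w).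
      { induction w; simpl; auto. constructor; auto. apply qrep_qcls; auto. }
      eapply Qt; [apply Hf2, HF|]. eapply Qt; [apply rst_step; left; exact Huv|]. apply Qs, Hf2, HF. }
  split; [split; [exact Hc | exists a1, b1; exact Hab1]|].
  split; [|split].
  -
    intros x y H. apply HqR in H. simpl in H. apply HC2 in H.
    rewrite <- (qcls_qrep B sim x), <- (qcls_qrep B sim y). apply qcls_eq; auto.
  -
    intro H. apply HqR in H. simpl in H.
    assert (H1 : simR B sim [bone B] []).
    { eapply Qt; [|exact H]. apply Hf2. constructor; [apply Hsy, qrep_qcls; auto | constructor]. }
    assert (Hall : forall x, sim x e).
    { intro x. apply HC2. pose proof (Qm [x] [x] [bone B] [] (Qr _) H1) as H2.
      rewrite !nprod1 in H2. simpl in H2. rewrite Hone_r in H2.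
      eapply Qt; [exact H2|]. apply Qs, rst_step; left; exact He. }
    apply Hab1. eauto.
  - intro x. set (a := qrep B sim x).
    destruct (classic (exists b c, ~ sim (bmul B a b) (bmul B a c))) as [Hex|Hno].
    + right. intros y z Hyz. simpl in Hyz. unfold qmul in Hyz. fold a in Hyz.
      apply qcls_inj in Hyz; auto.
      set (sa := fun b c => sim (bmul B a b) (bmul B a c)).
      assert (Hsa : proper_congruence B sa).
      { assert (Heqa : equivalence _ sa).
        { split; [intros u; apply Hr | intros u v w H1 H2; eapply Htr; eauto | intros u v H1; apply Hsy; auto]. }
        split; [|exact Hex]. split; [exact Heqa|split].
        - apply linN_preadd.
          + intro; apply Hr.
          + intros u v w H0. unfold sa in *. rewrite !Hassoc. apply HmulL; auto.
          + intros u v w H0. unfold sa in *. rewrite (Hcomm w u), (Hcomm w v), !Hassoc. apply HmulL; auto.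
        - intros u v; split; intro H0.
          + apply HC2.
            assert (Hg : forall s t, simR B sa s t -> simR B sim (map (bmul B a) s) (map (bmul B a) t)).
            { apply crst_map2. intros s t [H3|H3].
              - apply rst_step; left. pose proof (Pm [a] [a] _ _ (Pr _) H3) as H4. rewrite !nprod1 in H4. exact H4.
              - apply rst_step; right. apply linN_map with (R := sa); auto. }
            apply (Hg _ _ H0).
          + apply rst_step; right; apply rst_step; left; constructor; auto. }
      assert (Hsub : forall u v, sim u v -> sa u v) by (intros; unfold sa; apply HmulR; auto).
      pose proof (Hmax sa Hsa Hsub _ _ Hyz) as H.
      rewrite <- (qcls_qrep B sim y), <- (qcls_qrep B sim z). apply qcls_eq; auto.
    + left. assert (Hae : sim a (bmul B a e)).
      { apply NNPP. intro Hn. apply Hno. exists (bone B), e. rewrite Hone_r. exact Hn. }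
      unfold is_zero. simpl. intros P HPP Himg.
      assert (HZ : bR B [bmul B a e] []).
      { pose proof (Pm [a] [a] [e] [] (Pr _) He) as H. rewrite !nprod1 in H. exact H. }
      pose proof (Himg _ _ HZ) as H. simpl in H.
      rewrite <- (qcls_qrep B sim x). fold a. rewrite (qcls_eq B sim a (bmul B a e)); auto.
Qed.

Theorem mainTheorem15 (B : bp) (HB : is_blueprint B) :
  (forall I : bT B -> Prop, maximal_ideal B I -> prime_ideal B I) /\
  ((exists e : bT B, is_zero B e) ->
   forall sim : bT B -> bT B -> Prop,
     maximal_congruence B sim -> prime_congruence B sim).
Proof.
  split; [apply part1 | apply part2]; auto.
Qed.
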